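(* Let $m\ge 1$ and $A=(a_0,\ldots,a_m)$ real with $a_0,a_m\neq0$. If $w$ is a nonzero complex number with $P_A(w)=P_A(w^{-1})=0$, then $T_{n,A}\!\left(\tfrac12(w+w^{-1})\right)=0$ for all $n\ge m$.
   Context: $T_k$ denotes the Chebyshev polynomial of the first kind, $T_k(\cos\theta)=\cos k\theta$. For $A=(a_0,\ldots,a_m)$ real with $a_0,a_m\ne0$ and $n\ge m$, $T_{n,A}(x)=\sum_{i=0}^m a_iT_{n-i}(x)$ and $P_A(x)=\sum_{i=0}^m a_ix^{m-i}$. *)

(* Defs.v *)
From HB Require Import structures.
From mathcomp Require Import all_boot all_order all_algebra.
Set Implicit Arguments. Unset Strict Implicit. Unset Printing Implicit Defensive.
Import Order.TTheory GRing.Theory Num.Theory.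
Local Open Scope ring_scope.

Fixpoint chebT (R : nzRingType) (k : nat) : {poly R} :=
  match k with
  | 0%N => 1
  | 1%N => 'X
  | (k'.+1 as k1).+1 => ('X *+ 2) * chebT R k1 - chebT R k'
  end.

(* A = (a_0, ..., a_m) is given by a : nat -> R, using indices 0..m. *)
Definition chebTA (R : nzRingType) (n m : nat) (a : nat -> R) : {poly R} :=
  \sum_(i < m.+1) a i *: chebT R (n - i)%N.

Definition PA (R : nzRingType) (m : nat) (a : nat -> R) : {poly R} :=
  \sum_(i < m.+1) a i *: 'X^(m - i)%N.

(* Main.v *)
Require Import Defs.
From HB Require Import structures.
From mathcomp Require Import all_boot all_order all_algebra.
From mathcomp Require Import ring zify.
Import Order.TTheory GRing.Theory Num.Theory.
Local Open Scope ring_scope.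

Lemma cheb_eval (C : numClosedFieldType) (w u : C) : w * u = 1 ->
  forall k, (chebT C k).[(w + u) / 2%:R] = (w ^+ k + u ^+ k) / 2%:R.
Proof.
move=> hu.
have h2 : (2%:R : C) != 0 by rewrite pnatr_eq0.
suff H : forall k, (chebT C k).[(w + u) / 2%:R] = (w ^+ k + u ^+ k) / 2%:R /\
   (chebT C k.+1).[(w + u) / 2%:R] = (w ^+ k.+1 + u ^+ k.+1) / 2%:R.
  by move=> k; case: (H k).
elim=> [|k [IH1 IH2]].
  split; rewrite /= ?hornerC ?hornerX ?expr0 ?expr1 //.
  by field.
split=> //.
rewrite [chebT C k.+2]/= hornerD hornerN hornerM hornerMn hornerX IH1 IH2.
have -> : w ^+ k.+2 + u ^+ k.+2 = (w + u) * (w ^+ k.+1 + u ^+ k.+1) - (w * u) * (w ^+ k + u ^+ k)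
  by rewrite !exprS; ring.
rewrite hu mul1r.
by field.
Qed.

Theorem corollary2p2 (C : numClosedFieldType) (m : nat) (a : nat -> C) :
  (1 <= m)%N ->
  (forall i, (i <= m)%N -> a i \is Num.real) ->
  a 0%N != 0 -> a m != 0 ->
  forall w : C, w != 0 ->
  (PA m a).[w] = 0 -> (PA m a).[w^-1] = 0 ->
  forall n : nat, (m <= n)%N ->
  (chebTA n m a).[(w + w^-1) / 2%:R] = 0.
Proof.
move=> _ _ _ _ w w0 Pw Pu n mn.
have hu : w * w^-1 = 1 by rewrite mulfV.
rewrite /chebTA horner_sum.
under eq_bigr => i _ do rewrite hornerZ (@cheb_eval C w w^-1 hu).
have E : forall x, (PA m a).[x] = \sum_(i < m.+1) a i * x ^+ (m - i).
  by move=> x; rewrite /PA horner_sum; apply: eq_bigr => i _; rewrite hornerZ hornerXn.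
rewrite !E in Pw Pu.
have -> : \sum_(i < m.+1) a i * ((w ^+ (n - i) + w^-1 ^+ (n - i)) / 2%:R) =
  (w ^+ (n - m) * \sum_(i < m.+1) a i * w ^+ (m - i) +
   w^-1 ^+ (n - m) * \sum_(i < m.+1) a i * w^-1 ^+ (m - i)) / 2%:R.
  rewrite !mulr_sumr -big_split mulr_suml /=; apply: eq_bigr => i _.
  have -> : (n - i = (n - m) + (m - i))%N by have := ltn_ord i; lia.
  rewrite !exprD; ring.
by rewrite Pw Pu !mulr0 addr0 mul0r.
Qed.
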